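(* Let $Q$ be a complete quiver with exactly two frozen vertices, and let $j$ be a mutable vertex which is cycle-preserving for $Q$ and is not the apex of a vortex in $Q$. Then $\mu_j(Q)$ is a brog quiver.
   Context: A quiver is a finite directed multigraph with no loops and no oriented 2-cycles, whose vertex set is partitioned into mutable and frozen vertices; arrows between two frozen vertices are ignored. $b_{ik}$ = number of arrows $i\to k$ minus number of arrows $k\to i$; $Q|_S$ is the induced subquiver on $S$. Mutation $\mu_j$ at mutable $j$: for each path $i\to j\to k$ add $b_{ij}b_{jk}$ arrows $i\to k$, reverse all arrows at $j$, cancel 2-cycles. Complete: at least one arrow between every pair of vertices at least one of which is mutable. A 3-vertex (sub)quiver is an oriented 3-cycle if it has at most one frozen vertex and its underlying directed graph is not acyclic. A mutable vertex $j$ is cycle-preserving for $Q$ if whenever $Q|_{\{i,j,k\}}$ is an oriented 3-cycle containing $j$, so is $\mu_j(Q)|_{\{i,j,k\}}$. A vortex is a quiver on four vertices, at least three mutable, in which one vertex (the apex) is a source or sink and the other three support an oriented cycle; $j$ is the apex of a vortex in $Q$ if it is the apex of some 4-vertex induced subquiver that is a vortex. A mutable vertex adjacent to at least one frozen vertex is red (resp. green) if all arrows between it and frozen vertices point towards (resp. away from) it. Two mutable vertices $i,j$ are complementary if for every frozen vertex $u$ with $b_{iu}\ne0$ and $b_{ju}\ne0$, $b_{iu}$ and $b_{ju}$ have opposite signs. A quiver is brog if its mutable vertices can be coloured blue, red, orange and green such that: (1) the vertices coloured red are exactly the red vertices; (2) the vertices coloured green are exactly the green vertices; (3) each blue vertex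 $i$ has $b_{ij}\ge0$ for every red $j$ and $b_{ij}\le0$ for every green $j$; (4) each orange vertex $i$ has $b_{ij}\ge0$ for every green $j$ and $b_{ij}\le0$ for every red $j$; (5) every blue vertex and every orange vertex are complementary. *)

(* Defs.v *)
(* A quiver with no loops and no oriented 2-cycles is encoded
   by its skew-symmetric integer exchange matrix  B i k = b_ik  on a finite
   vertex type V, together with the set F of frozen vertices. *)
From mathcomp Require Import all_boot all_order all_algebra.
Set Implicit Arguments. Unset Strict Implicit. Unset Printing Implicit Defensive.
Import Order.TTheory GRing.Theory Num.Theory.
Local Open Scope ring_scope.

Section Quivers.
Variable V : finType.
Implicit Types (B : V -> V -> int) (F : {set V}).

(* B is the exchange matrix of a quiver: b_ik = #(i->k) - #(k->i). *)
Definition qskew B := forall i k, B i k = - B k i.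

Definition mutable F (v : V) := v \notin F.

(* Mutation at j: for each path i -> j -> k add b_ij b_jk arrows i -> k,
   reverse all arrows at j, cancel 2-cycles. *)
Definition mutate (j : V) B : V -> V -> int := fun i k =>
  if (i == j) || (k == j) then - B i k
  else B i k +
       (if (0 < B i j) && (0 < B j k) then B i j * B j k
        else if (B i j < 0) && (B j k < 0) then - (B i j * B j k)
        else 0).

Definition qcomplete B F :=
  forall i k, i != k -> (i \notin F) || (k \notin F) -> B i k != 0.

Definition dcycle3 B (x y z : V) := [&& 0 < B x y, 0 < B y z & 0 < B z x].

(* The induced subquiver on {a,b,c} (three distinct vertices) is an oriented
   3-cycle: at most one frozen vertex and its underlying directed graph is not
   acyclic (for a 3-vertex digraph without loops/2-cycles this means it
   contains a directed 3-cycle in one of the two cyclic orientations). *)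
Definition oriented3 B F (a b c : V) :=
  [&& uniq [:: a; b; c],
      (#|F :&: [set a; b; c]| <= 1)%N
    & (dcycle3 B a b c || dcycle3 B a c b)].

Definition cycle_preserving B F (j : V) :=
  mutable F j /\
  forall i k, oriented3 B F i j k -> oriented3 (mutate j B) F i j k.

Definition vortex_apex B F (j : V) :=
  exists a b c : V,
    [/\ uniq [:: j; a; b; c],
        (#|F :&: [set j; a; b; c]| <= 1)%N,
        (forall x, x \in [:: a; b; c] -> B x j <= 0) \/
        (forall x, x \in [:: a; b; c] -> B j x <= 0)
      & dcycle3 B a b c \/ dcycle3 B a c b].

Definition has_frozen_nbr B F (v : V) := exists u, u \in F /\ B v u != 0.

Definition is_red B F (v : V) :=
  [/\ mutable F v, has_frozen_nbr B F v & forall u, u \in F -> B u v >= 0].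
Definition is_green B F (v : V) :=
  [/\ mutable F v, has_frozen_nbr B F v & forall u, u \in F -> B v u >= 0].

Definition complementary B F (i j : V) :=
  forall u, u \in F -> B i u != 0 -> B j u != 0 -> B i u * B j u < 0.

Inductive colour := Blue | Red | Orange | Green.

Definition brog B F :=
  exists col : V -> colour,
  [/\ forall v, mutable F v -> (col v = Red <-> is_red B F v),
      forall v, mutable F v -> (col v = Green <-> is_green B F v),
      forall i, mutable F i -> col i = Blue ->
        forall j, mutable F j ->
          (col j = Red -> 0 <= B i j) /\ (col j = Green -> B i j <= 0),
      forall i, mutable F i -> col i = Orange ->
        forall j, mutable F j ->
          (col j = Green -> 0 <= B i j) /\ (col j = Red -> B i j <= 0)
    & forall i k, mutable F i -> mutable F k -> col i = Blue -> col k = Orange ->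
        complementary B F i k].

End Quivers.

(* Main.v *)
Require Import Defs.
From mathcomp Require Import all_boot all_order all_algebra zify.
Import Order.TTheory GRing.Theory Num.Theory.
Local Open Scope ring_scope.

Lemma mut_skew (V : finType) (B : V -> V -> int) (j : V) :
  qskew B -> qskew (mutate j B).
Proof.
move=> sk i k; rewrite /mutate [(k == j) || _]orbC.
case: ifP => _; first by rewrite (sk i k) opprK.
rewrite (sk k i) (sk k j) (sk j i).
have e : (- B j k) * (- B i j) = B i j * B j k by rewrite mulrNN mulrC.
rewrite e !oppr_gt0 !oppr_lt0.
set a := B i j; set b := B j k; set p := a * b.
have [ha|ha|ha] := ltrgtP 0 a; have [hb|hb|hb] := ltrgtP 0 b => /=;
  rewrite ?ha ?hb /=; lia.
Qed.

Lemma mut_jl (V : finType) (B : V -> V -> int) (j y : V) :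
  mutate j B j y = - B j y.
Proof. by rewrite /mutate eqxx. Qed.

Lemma mut_jr (V : finType) (B : V -> V -> int) (j x : V) :
  mutate j B x j = - B x j.
Proof. by rewrite /mutate eqxx orbT. Qed.

Lemma mut_in (V : finType) (B : V -> V -> int) (j x y : V) :
  qskew B -> x != j -> y != j -> 0 < B x j -> 0 < B y j -> mutate j B x y = B x y.
Proof.
move=> sk xj yj hx hy; rewrite /mutate (negbTE xj) (negbTE yj) /=.
have hjy : B j y < 0 by rewrite sk; lia.
rewrite (_ : (0 < B x j) && (0 < B j y) = false);
  last by apply/negbTE/negP => /andP[_ h]; lia.
rewrite (_ : (B x j < 0) && (B j y < 0) = false);
  last by apply/negbTE/negP => /andP[h _]; lia.
by rewrite addr0.
Qed.

Lemma mut_out (V : finType) (B : V -> V -> int) (j x y : V) :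
  qskew B -> x != j -> y != j -> 0 < B j x -> 0 < B j y -> mutate j B x y = B x y.
Proof.
move=> sk xj yj hx hy; rewrite /mutate (negbTE xj) (negbTE yj) /=.
have hxj : B x j < 0 by rewrite sk; lia.
rewrite (_ : (0 < B x j) && (0 < B j y) = false);
  last by apply/negbTE/negP => /andP[h _]; lia.
rewrite (_ : (B x j < 0) && (B j y < 0) = false);
  last by apply/negbTE/negP => /andP[_ h]; lia.
by rewrite addr0.
Qed.

Lemma card_le1 (V : finType) (F S : {set V}) (w : V) :
  (forall z, z \in F -> z \in S -> z = w) -> (#|F :&: S| <= 1)%N.
Proof.
move=> H.
apply: leq_trans (subset_leq_card (_ : F :&: S \subset [set w])) _;
  last by rewrite cards1.
apply/subsetP => z /setIP[zF zS]; by rewrite (H z zF zS) inE.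
Qed.

Ltac keep_int T :=
  lazymatch T with
  | is_true (?a < _)%R => let t := type of a in unify t int
  | is_true (?a <= _)%R => let t := type of a in unify t int
  | is_true (?a != _) => let t := type of a in unify t int
  | @eq ?t _ _ => unify t int
  end.
Ltac slia := repeat match goal with
  | H : ?T |- _ => tryif keep_int T then fail else clear H
  end; lia.

Theorem mainTheorem13 (V : finType) (B : V -> V -> int) (F : {set V}) (j : V) :
  qskew B -> qcomplete B F -> #|F| = 2%N ->
  cycle_preserving B F j -> ~ vortex_apex B F j ->
  brog (mutate j B) F.
Proof.
move=> sk comp F2 [mj cp] nv.
have jF : j \notin F by [].
set B' := mutate j B.
have sk' : qskew B' by exact: mut_skew.
have nfr : forall x u, x \notin F -> u \in F -> x != u.
  by move=> x u xF uF; apply/eqP => e; move: xF; rewrite e uF.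
have side : forall v, v != j -> 0 < B v j \/ 0 < B j v.
  move=> v vj; have := comp v j vj; rewrite jF orbT => /(_ isT) h.
  have := sk j v; slia.
have SR : forall x y, x != j -> y != j -> x != y -> (x \notin F) || (y \notin F) ->
    0 < B x j -> 0 < B j y -> 0 < B' x y.
  move=> x y xj yj xy xyF hx hy.
  have nz := comp x y xy xyF.
  have [hxy|hxy] : 0 < B x y \/ B x y < 0 by slia.
    rewrite /B' /mutate (negbTE xj) (negbTE yj) /= hx hy /=.
    have := mulr_gt0 hx hy; slia.
  have o3 : oriented3 B F x j y.
    apply/and3P; split.
    - by rewrite /= !inE negb_or xy xj eq_sym yj.
    - case/orP: xyF => hF.
      + apply: (@card_le1 _ _ _ y) => z zF; rewrite !inE => /orP[/orP[]|] /eqP e //.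
        * by move: hF; rewrite -e zF.
        * by move: jF; rewrite -e zF.
      + apply: (@card_le1 _ _ _ x) => z zF; rewrite !inE => /orP[/orP[]|] /eqP e //.
        * by move: jF; rewrite -e zF.
        * by move: hF; rewrite -e zF.
    - apply/orP; left; apply/and3P; split => //; rewrite sk; slia.
  have := cp x y o3 => /and3P[_ _ /orP[] /and3P[h1 h2 h3]].
    by move: h1; rewrite mut_jr; slia.
  exact: h1.
have EQin : forall x y, x != j -> y != j -> 0 < B x j -> 0 < B y j -> B' x y = B x y.
  by move=> x y; apply: mut_in.
have EQout : forall x y, x != j -> y != j -> 0 < B j x -> 0 < B j y -> B' x y = B x y.
  by move=> x y; apply: mut_out.
have Bjl : forall y, B' j y = - B j y by move=> y; apply: mut_jl.
have Bjr : forall x, B' x j = - B x j by move=> x; apply: mut_jr.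
have NZ' : forall x y, x != y -> (x \notin F) || (y \notin F) -> B' x y != 0.
  move=> x y xy xyF.
  have nz := comp x y xy xyF.
  case: (eqVneq x j) => [exj|xj]; first by move: nz; rewrite exj Bjl; slia.
  case: (eqVneq y j) => [eyj|yj]; first by move: nz; rewrite eyj Bjr; slia.
  case: (side x xj) => hx; case: (side y yj) => hy.
  - by rewrite EQin.
  - by have := SR x y xj yj xy xyF hx hy; slia.
  - have yx : y != x by rewrite eq_sym.
    have := SR y x yj xj yx _ hy hx.
    rewrite orbC => /(_ xyF); rewrite (sk' y x); slia.
  - by rewrite EQout.
clearbody B'.
have oL : forall a b : bool, a -> a || b by move=> [] b.
have oR : forall a b : bool, b -> a || b by move=> a [] //; rewrite orbT.
have ujF : forall u, u \in F -> u != j.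
  by move=> u uF; apply/eqP => e; move: jF; rewrite -e uF.
have NVin : forall a b c, a \notin F -> b \notin F -> a != j -> b != j -> c != j ->
    a != b -> a != c -> b != c ->
    0 < B a j -> 0 < B b j -> 0 < B c j -> 0 < B a b -> 0 < B b c -> 0 < B c a -> False.
  move=> a b c aF bF aj bj cj ab ac bc ha hb hc h1 h2 h3.
  apply: nv; exists a, b, c; split.
  - have ja : j != a by rewrite eq_sym.
    have jb : j != b by rewrite eq_sym.
    have jc : j != c by rewrite eq_sym.
    by rewrite /= !inE !negb_or ja jb jc ab ac bc.
  - apply: (@card_le1 _ _ _ c) => z zF zS.
    case: (eqVneq z c) => // zc; exfalso.
    have za : (z == a) = false by apply/negbTE; rewrite eq_sym; exact: nfr.
    have zb : (z == b) = false by apply/negbTE; rewrite eq_sym; exact: nfr.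
    have zj : (z == j) = false by apply/negbTE; exact: ujF.
    by move: zS; rewrite !inE za zb zj (negbTE zc).
  - right => x; rewrite !inE => /orP[/eqP->|/orP[/eqP->|/eqP->]]; rewrite sk oppr_le0 ltW //.
  - by left; apply/and3P.
have NVout : forall a b c, a \notin F -> b \notin F -> a != j -> b != j -> c != j ->
    a != b -> a != c -> b != c ->
    0 < B j a -> 0 < B j b -> 0 < B j c -> 0 < B a b -> 0 < B b c -> 0 < B c a -> False.
  move=> a b c aF bF aj bj cj ab ac bc ha hb hc h1 h2 h3.
  apply: nv; exists a, b, c; split.
  - have ja : j != a by rewrite eq_sym.
    have jb : j != b by rewrite eq_sym.
    have jc : j != c by rewrite eq_sym.
    by rewrite /= !inE !negb_or ja jb jc ab ac bc.
  - apply: (@card_le1 _ _ _ c) => z zF zS.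
    case: (eqVneq z c) => // zc; exfalso.
    have za : (z == a) = false by apply/negbTE; rewrite eq_sym; exact: nfr.
    have zb : (z == b) = false by apply/negbTE; rewrite eq_sym; exact: nfr.
    have zj : (z == j) = false by apply/negbTE; exact: ujF.
    by move: zS; rewrite !inE za zb zj (negbTE zc).
  - left => x; rewrite !inE => /orP[/eqP->|/orP[/eqP->|/eqP->]]; rewrite sk oppr_le0 ltW //.
  - by left; apply/and3P.
have F2' : #|F| == 2%N by rewrite F2.
have [u1 [u2 [u12 eF]]] := cards2P _ F2'.
have inF : forall u, u \in F -> u = u1 \/ u = u2.
  by move=> u; rewrite eF !inE => /orP[/eqP|/eqP]; [left|right].
have u1F : u1 \in F by rewrite eF !inE eqxx.
have two : forall a b u, a \in F -> b \in F -> a != b -> u \in F -> u = a \/ u = b.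
  move=> a b u aF bF ab uF.
  case/inF: aF => ea; case/inF: bF => eb; case/inF: uF => eu; subst;
    first [by left | by right | by rewrite eqxx in ab].
pose hasn v := [exists u in F, B' v u != 0].
pose redb v := hasn v && [forall u in F, 0 <= B' u v].
pose greenb v := hasn v && [forall u in F, 0 <= B' v u].
have hasnT : forall v, v \notin F -> hasn v.
  move=> v vF; apply/existsP; exists u1; rewrite u1F /=.
  apply: NZ'; [exact: nfr | by rewrite vF].
have redE : forall v, v \notin F -> redb v -> forall u, u \in F -> 0 < B' u v.
  move=> v vF /andP[_ /forall_inP h] u uF.
  have := h u uF.
  have := nfr v u vF uF; rewrite eq_sym => uv.
  by have := NZ' u v uv; rewrite vF orbT => /(_ isT); slia.
have greenE : forall v, v \notin F -> greenb v -> forall u, u \in F -> 0 < B' v u.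
  move=> v vF /andP[_ /forall_inP h] u uF.
  have := h u uF.
  by have := NZ' v u (nfr v u vF uF); rewrite vF /= => /(_ isT); slia.
have mixed_r : forall v, v \notin F -> ~~ redb v -> exists u, u \in F /\ 0 < B' v u.
  move=> v vF; rewrite /redb hasnT //= => /forall_inPn [u uF h].
  exists u; split => //; rewrite -ltNge in h; rewrite sk'; slia.
have mixed_g : forall v, v \notin F -> ~~ greenb v -> exists u, u \in F /\ 0 < B' u v.
  move=> v vF; rewrite /greenb hasnT //= => /forall_inPn [u uF h].
  exists u; split => //; rewrite -ltNge in h; rewrite sk'; slia.
have red_green : forall v, redb v -> greenb v -> False.
  move=> v /andP[/existsP[u /andP[uF h1]] /forall_inP h2] /andP[_ /forall_inP h3].
  have := h2 u uF; have := h3 u uF; rewrite (sk' u v); slia.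
have C3a : forall i r, i \notin F -> r \notin F -> i != j -> ~~ redb i -> ~~ greenb i ->
    redb r -> i != r -> 0 <= B' i r.
  move=> i r iF rF ij nri ngi rr ir.
  have rpos := redE r rF rr.
  case: (eqVneq r j) => [erj|rj].
    rewrite erj Bjr; case: (side i ij) => hi; last by have := sk i j; slia.
    exfalso; apply: (negP ngi); apply/andP; split; first exact: hasnT.
    apply/forall_inP => u uF.
    have := rpos u uF; rewrite erj Bjr => h.
    have hju : 0 < B j u by rewrite sk; slia.
    have := SR i u ij (ujF u uF) (nfr i u iF uF) (oL _ _ iF) hi hju; slia.
  rewrite leNgt; apply/negP => hneg.
  case: (side i ij) => hi; case: (side r rj) => hr.
  - have [u [uF hu]] := mixed_r i iF nri.
    case: (side u (ujF u uF)) => hu'.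
    + have e1 := EQin i u ij (ujF u uF) hi hu'.
      have e2 := EQin u r (ujF u uF) rj hu' hr.
      have e3 := EQin r i rj ij hr hi.
      have := rpos u uF; rewrite e2 => h2.
      move: hneg; rewrite (sk' i r) e3 => h3.
      rewrite e1 in hu.
      apply: (NVin r i u rF iF rj ij (ujF u uF)) => //.
      * by rewrite eq_sym.
      * exact: nfr.
      * exact: nfr.
      * slia.
    + have := SR r u rj (ujF u uF) (nfr r u rF uF) (oL _ _ rF) hr hu'.
      have := rpos u uF; rewrite (sk' r u); slia.
  - have := SR i r ij rj ir (oL _ _ iF) hi hr; slia.
  - apply: (negP nri); apply/andP; split; first exact: hasnT.
    apply/forall_inP => u uF.
    have ui : u != i by rewrite eq_sym; exact: nfr.
    case: (side u (ujF u uF)) => hu.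
    + have := SR u i (ujF u uF) ij ui (oR _ _ iF) hu hi; slia.
    + have := SR r u rj (ujF u uF) (nfr r u rF uF) (oL _ _ rF) hr hu.
      have := rpos u uF; rewrite (sk' r u); slia.
  - have [u [uF hu]] := mixed_r i iF nri.
    have ui : u != i by rewrite eq_sym; exact: nfr.
    case: (side u (ujF u uF)) => hu'.
    + have := SR u i (ujF u uF) ij ui (oR _ _ iF) hu' hi.
      rewrite (sk' u i); slia.
    + have e1 := EQout i u ij (ujF u uF) hi hu'.
      have e2 := EQout u r (ujF u uF) rj hu' hr.
      have e3 := EQout r i rj ij hr hi.
      have := rpos u uF; rewrite e2 => h2.
      move: hneg; rewrite (sk' i r) e3 => h3.
      rewrite e1 in hu.
      apply: (NVout r i u rF iF rj ij (ujF u uF)) => //.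
      * by rewrite eq_sym.
      * exact: nfr.
      * exact: nfr.
      * slia.
have C3b : forall i g, i \notin F -> g \notin F -> i != j -> ~~ redb i -> ~~ greenb i ->
    greenb g -> i != g -> B' i g <= 0.
  move=> i g iF gF ij nri ngi gg ig.
  have gpos := greenE g gF gg.
  case: (eqVneq g j) => [egj|gj].
    rewrite egj Bjr; case: (side i ij) => hi; first by slia.
    exfalso; apply: (negP nri); apply/andP; split; first exact: hasnT.
    apply/forall_inP => u uF.
    have ui : u != i by rewrite eq_sym; exact: nfr.
    have := gpos u uF; rewrite egj Bjl => h.
    have huj : 0 < B u j by rewrite sk; slia.
    have := SR u i (ujF u uF) ij ui (oR _ _ iF) huj hi; slia.
  rewrite leNgt; apply/negP => hpos.
  case: (side i ij) => hi; case: (side g gj) => hg.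
  - have [u [uF hu]] := mixed_g i iF ngi.
    case: (side u (ujF u uF)) => hu'.
    + have e1 := EQin u i (ujF u uF) ij hu' hi.
      have e2 := EQin g u gj (ujF u uF) hg hu'.
      have e3 := EQin i g ij gj hi hg.
      have := gpos u uF; rewrite e2 => h2.
      rewrite e3 in hpos. rewrite e1 in hu.
      apply: (NVin i g u iF gF ij gj (ujF u uF)) => //; exact: nfr.
    + have := SR i u ij (ujF u uF) (nfr i u iF uF) (oL _ _ iF) hi hu'.
      rewrite (sk' i u); slia.
  - apply: (negP ngi); apply/andP; split; first exact: hasnT.
    apply/forall_inP => u uF.
    have ug : u != g by rewrite eq_sym; exact: nfr.
    case: (side u (ujF u uF)) => hu.
    + have := SR u g (ujF u uF) gj ug (oR _ _ gF) hu hg.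
      have := gpos u uF; rewrite (sk' g u); slia.
    + have := SR i u ij (ujF u uF) (nfr i u iF uF) (oL _ _ iF) hi hu; slia.
  - have gi : g != i by rewrite eq_sym.
    have := SR g i gj ij gi (oL _ _ gF) hg hi; rewrite (sk' g i); slia.
  - have [u [uF hu]] := mixed_g i iF ngi.
    have ug : u != g by rewrite eq_sym; exact: nfr.
    case: (side u (ujF u uF)) => hu'.
    + have := SR u g (ujF u uF) gj ug (oR _ _ gF) hu' hg.
      have := gpos u uF; rewrite (sk' g u); slia.
    + have e1 := EQout u i (ujF u uF) ij hu' hi.
      have e2 := EQout g u gj (ujF u uF) hg hu'.
      have e3 := EQout i g ij gj hi hg.
      have := gpos u uF; rewrite e2 => h2.
      rewrite e3 in hpos. rewrite e1 in hu.
      apply: (NVout i g u iF gF ij gj (ujF u uF)) => //; exact: nfr.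
have rj_ne : forall v, ~~ redb j -> redb v -> v != j.
  by move=> v nrj rv; apply/eqP => e; move: nrj; rewrite -e rv.
have gj_ne : forall v, ~~ greenb j -> greenb v -> v != j.
  by move=> v ngj gv; apply/eqP => e; move: ngj; rewrite -e gv.
have C4a : forall r, ~~ redb j -> ~~ greenb j -> redb r -> r \notin F -> B' j r <= 0.
  move=> r nrj ngj rr rF.
  have rj := rj_ne r nrj rr.
  rewrite Bjl; case: (side r rj) => hr; last by slia.
  exfalso.
  have [u [uF hu]] := mixed_g j jF ngj.
  move: hu; rewrite Bjr => hu.
  have hju : 0 < B j u by rewrite sk; slia.
  have := SR r u rj (ujF u uF) (nfr r u rF uF) (oL _ _ rF) hr hju.
  have := redE r rF rr u uF; rewrite (sk' r u); slia.
have C4b : forall g, ~~ redb j -> ~~ greenb j -> greenb g -> g \notin F -> 0 <= B' j g.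
  move=> g nrj ngj gg gF.
  have gj := gj_ne g ngj gg.
  rewrite Bjl; case: (side g gj) => hg; first by have := sk j g; slia.
  exfalso.
  have [u [uF hu]] := mixed_r j jF nrj.
  move: hu; rewrite Bjl => hu.
  have huj : 0 < B u j by rewrite sk; slia.
  have ug : u != g by rewrite eq_sym; exact: nfr.
  have := SR u g (ujF u uF) gj ug (oR _ _ gF) huj hg.
  have := greenE g gF gg u uF; rewrite (sk' g u); slia.
have C5 : forall i, i \notin F -> i != j -> ~~ redb i -> ~~ greenb i ->
    ~~ redb j -> ~~ greenb j -> complementary B' F i j.
  move=> i iF ij nri ngi nrj ngj.
  have [a [aF ha]] := mixed_r j jF nrj.
  have [b [bF hb]] := mixed_g j jF ngj.
  have hA : 0 < B a j by move: ha; rewrite Bjl sk; slia.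
  have hB : 0 < B j b by move: hb; rewrite Bjr sk; slia.
  have ab : a != b.
    apply/eqP => e; move: hb; rewrite -e (sk' a j); slia.
  have ai : a != i by rewrite eq_sym; exact: nfr.
  have ib : i != b by exact: nfr.
  have negA : B' i a < 0.
    case: (side i ij) => hi.
    - have := SR i b ij (ujF b bF) ib (oL _ _ iF) hi hB => hib.
      have [w [wF hw]] := mixed_g i iF ngi.
      case: (two a b w aF bF ab wF) => ew; rewrite ew in hw.
      + by rewrite sk'; slia.
      + by rewrite (sk' b i) in hw; slia.
    - have := SR a i (ujF a aF) ij ai (oR _ _ iF) hA hi.
      by rewrite (sk' a i); slia.
  have posB : 0 < B' i b.
    case: (side i ij) => hi.
    - exact: (SR i b ij (ujF b bF) ib (oL _ _ iF) hi hB).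
    - have := SR a i (ujF a aF) ij ai (oR _ _ iF) hA hi => hai.
      have [w [wF hw]] := mixed_r i iF nri.
      case: (two a b w aF bF ab wF) => ew; rewrite ew in hw.
      + by rewrite (sk' i a) in hw; slia.
      + exact: hw.
  move=> u uF _ _.
  case: (two a b u aF bF ab uF) => ->.
  - by rewrite pmulr_llt0.
  - have hjb : B' j b < 0 by rewrite sk'; slia.
    by rewrite pmulr_rlt0.
have hasnE : forall v, has_frozen_nbr B' F v <-> hasn v.
  move=> v; split.
  - by case=> u [uF h]; apply/existsP; exists u; rewrite uF.
  - by move/existsP => [u /andP[uF h]]; exists u.
have isred : forall v, v \notin F -> is_red B' F v <-> redb v.
  move=> v vF; split.
  - case=> _ /hasnE hn h; apply/andP; split => //; apply/forall_inP => u uF; exact: h.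
  - move=> /andP[hn /forall_inP h]; split => //; first by apply/hasnE.
have isgr : forall v, v \notin F -> is_green B' F v <-> greenb v.
  move=> v vF; split.
  - case=> _ /hasnE hn h; apply/andP; split => //; apply/forall_inP => u uF; exact: h.
  - move=> /andP[hn /forall_inP h]; split => //; first by apply/hasnE.
pose col v := if redb v then Red else if greenb v then Green
              else if v == j then Orange else Blue.
have colB : forall v, col v = Blue -> [/\ ~~ redb v, ~~ greenb v & v != j].
  move=> v; rewrite /col; case: (redb v) => //; case: (greenb v) => //.
  by case: eqP.
have colO : forall v, col v = Orange -> [/\ ~~ redb v, ~~ greenb v & v = j].
  move=> v; rewrite /col; case: (redb v) => //; case: (greenb v) => //.
  by case: eqP.
have colR : forall v, col v = Red -> redb v.
  by move=> v; rewrite /col; case: (redb v) => //; case: (greenb v) => //; case: eqP.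
have colG : forall v, col v = Green -> greenb v.
  by move=> v; rewrite /col; case: (redb v) => //; case: (greenb v) => //; case: eqP.
exists col; split.
- move=> v vF; rewrite isred //; split; first exact: colR.
  by rewrite /col => ->.
- move=> v vF; rewrite isgr //; split; first exact: colG.
  move=> gv; rewrite /col gv.
  by case: (boolP (redb v)) => // rv; exfalso; exact: (red_green v).
- move=> i iF ci k kF; have [nri ngi ij] := colB i ci; split => ck.
  + have ik : i != k by apply/eqP => e; move: ci; rewrite e ck.
    exact: (C3a i k iF kF ij nri ngi (colR k ck) ik).
  + have ik : i != k by apply/eqP => e; move: ci; rewrite e ck.
    exact: (C3b i k iF kF ij nri ngi (colG k ck) ik).
- move=> i iF ci k kF; have [nri ngi ij] := colO i ci; subst i; split => ck.
  + exact: (C4b k nri ngi (colG k ck) kF).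
  + exact: (C4a k nri ngi (colR k ck) kF).
- move=> i k iF kF ci ck.
  have [nri ngi ij] := colB i ci; have [nrk ngk kj] := colO k ck; subst k.
  exact: (C5 i iF ij nri ngi nrk ngk).
Qed.
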